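(* Let $n\geq 5$ and let $G=C^2_n$. Then $G$ does not contain $W_6$ as a minor if and only if $5\leq n\leq 8$.
   Context: All graphs are finite and simple. For $n\geq 5$, $C^2_n$ is the graph obtained from a cycle $C_n$ by adding an edge between every pair of vertices at distance two on the cycle (it is $4$-connected). $W_6$ is the wheel obtained by joining a single new vertex to all vertices of a cycle of length $6$. A minor is obtained by a sequence of edge deletions and edge contractions (parallel edges arising from contractions are reduced to single edges). *)

(* Defs.v *)
From mathcomp Require Import all_boot.
Set Implicit Arguments. Unset Strict Implicit. Unset Printing Implicit Defensive.

(* A (labelled) graph living inside a finite type T: a vertex set V and an
   adjacency relation E (intended symmetric, irreflexive, supported on V). *)
Record sgraph (T : finType) := SGraph { gV : {set T}; gE : rel T }.

Definition is_simple (T : finType) (G : sgraph T) : Prop :=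
  (forall x y, gE G x y -> gE G y x) /\ (forall x, ~~ gE G x x) /\
  (forall x y, gE G x y -> (x \in gV G) && (y \in gV G)).

Definition del_edge (T : finType) (G : sgraph T) (a b : T) : sgraph T :=
  SGraph (gV G) (fun x y => gE G x y && ~~ (((x == a) && (y == b)) || ((x == b) && (y == a)))).

(* contract the edge ab: b is merged into a; parallel edges/loops are dropped *)
Definition contract_edge (T : finType) (G : sgraph T) (a b : T) : sgraph T :=
  let V' := gV G :\ b in
  SGraph V' (fun x y => [&& x \in V', y \in V', x != y &
                           [|| gE G x y, (x == a) && gE G b y | (y == a) && gE G x b]]).

Inductive minor_step (T : finType) : sgraph T -> sgraph T -> Prop :=
| MS_del (G : sgraph T) a b : gE G a b -> minor_step G (del_edge G a b)
| MS_contr (G : sgraph T) a b : gE G a b -> minor_step G (contract_edge G a b).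

Inductive minor_of (T : finType) : sgraph T -> sgraph T -> Prop :=
| MO_refl (G : sgraph T) : minor_of G G
| MO_step (G G1 G2 : sgraph T) : minor_step G G1 -> minor_of G1 G2 -> minor_of G G2.

Definition iso_to (U T : finType) (H : rel U) (G : sgraph T) : Prop :=
  exists f : U -> T, [/\ injective f, forall x, x \in gV G <-> exists u, f u = x
                       & forall u v, gE G (f u) (f v) = H u v].

Definition has_minor (U T : finType) (G : sgraph T) (H : rel U) : Prop :=
  exists G', minor_of G G' /\ iso_to H G'.

Definition C2_rel (n : nat) : rel 'I_n := fun i j =>
  (i != j) && [|| (i + 1) %% n == j, (i + 2) %% n == j, (j + 1) %% n == i | (j + 2) %% n == i].

Definition C2 (n : nat) : sgraph 'I_n := SGraph [set: 'I_n] (@C2_rel n).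

(* W_6 on 'I_7: hub 0, rim 1..6 forming the 6-cycle 1-2-3-4-5-6-1 *)
Definition W6_rel : rel 'I_7 := fun i j =>
  (i != j) && [|| (i == 0 :> nat), (j == 0 :> nat),
     ((0 < i) && (0 < j) && ((i %% 6).+1 == j)) | ((0 < i) && (0 < j) && ((j %% 6).+1 == i))].

(* Main.v *)
Require Import Defs.
From mathcomp Require Import all_boot.
From mathcomp Require Import zify.
From Stdlib Require Import FunctionalExtensionality.
Set Implicit Arguments. Unset Strict Implicit. Unset Printing Implicit Defensive.

Lemma card_setP n (P : pred nat) : #|[set v : 'I_n | P v]| = count P (iota 0 n).
Proof.
rewrite cardE /enum_mem size_filter -enumT -val_enum_ord count_map.
by apply: eq_count => v; rewrite /= in_set.
Qed.
Definition C2n (n i j : nat) : bool :=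
  (i != j) && [|| (i + 1) %% n == j, (i + 2) %% n == j, (j + 1) %% n == i | (j + 2) %% n == i].
Lemma C2E n (u v : 'I_n) : C2_rel u v = C2n n u v.
Proof. by []. Qed.
Lemma deg78 : all (fun i => count (C2n 7 i) (iota 0 7) <= 4) (iota 0 7) && all (fun i => count (C2n 8 i) (iota 0 8) <= 4) (iota 0 8).
Proof. by []. Qed.
Lemma pair8 : all (fun i => all (fun j => C2n 8 i j ==> (count (fun k => (C2n 8 i k || C2n 8 j k) && (k != i) && (k != j)) (iota 0 8) <= 5)) (iota 0 8)) (iota 0 8).
Proof. by []. Qed.

Lemma C2_sym n (x y : 'I_n) : C2_rel x y = C2_rel y x.
Proof.
rewrite /C2_rel eq_sym; case: ((x + 1) %% n == y); case: ((x + 2) %% n == y);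
 case: ((y + 1) %% n == x); case: ((y + 2) %% n == x); by rewrite ?orbT ?andbT ?andbF.
Qed.
Lemma C2_irr n (x : 'I_n) : C2_rel x x = false.
Proof. by rewrite /C2_rel eqxx. Qed.

Definition rC n (phi : 'I_n -> 'I_n) (c : 'I_n) : rel 'I_n :=
  fun p q => C2_rel p q && (phi p == c) && (phi q == c).

Definition Inv n (G : sgraph 'I_n) : Prop := exists phi : 'I_n -> 'I_n,
 [/\ forall x y, gE G x y -> [/\ x \in gV G, y \in gV G & x != y],
     forall u, phi u \in gV G,
     forall x, x \in gV G -> exists u, phi u = x,
     forall x y, gE G x y -> exists u v, [/\ phi u = x, phi v = y & C2_rel u v] &
     forall u u', phi u = phi u' -> connect (rC phi (phi u)) u u'].

Lemma Inv_C2 n : Inv (C2 n).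
Proof.
exists id; split => //=.
- by move=> x y /andP[xy _]; rewrite !in_setT.
- by move=> u; rewrite in_setT.
- by move=> x _; exists x.
- by move=> x y e; exists x, y.
- by move=> u u' ->; apply: connect0.
Qed.

Lemma Inv_step n (G G' : sgraph 'I_n) : minor_step G G' -> Inv G -> Inv G'.
Proof.
case=> {G G'} G a b Eab [phi [HE HV Hon Hl Hc]].
- exists phi; split => //=.
  + by move=> x y /andP[/HE ? _].
  + by move=> x y /andP[/Hl ? _].
- have [aV bV ab] := HE _ _ Eab.
  pose f (c : 'I_n) := if c == b then a else c.
  exists (fun u => f (phi u)); split => /=.
  + by move=> x y /and4P[xV yV xy _].
  + move=> u; rewrite /f /=; case: ifP => [_|nb]; rewrite !inE; [by rewrite ab aV | by rewrite nb HV].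
  + move=> x; rewrite !inE => /andP[xb xV]; have [u ux] := Hon x xV.
    by exists u; rewrite /f ux (negbTE xb).
  + move=> x y /and4P[xV yV xy /or3P[e|/andP[/eqP xa e]|/andP[/eqP ya e]]];
      rewrite !inE in xV yV; case/andP: xV => xb _; case/andP: yV => yb _.
    * have [u [v [ux vy uv]]] := Hl _ _ e.
      by exists u, v; rewrite /f ux vy (negbTE xb) (negbTE yb).
    * have [u [v [ux vy uv]]] := Hl _ _ e.
      by exists u, v; rewrite /f ux vy eqxx (negbTE yb) xa.
    * have [u [v [ux vy uv]]] := Hl _ _ e.
      by exists u, v; rewrite /f ux vy eqxx (negbTE xb) ya.
  + have mono c : subrel (rC phi c) (rC (fun u => f (phi u)) (f c)).
      by move=> p q /andP[/andP[pq /eqP pc] /eqP qc]; rewrite /rC pq pc qc eqxx.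
    have Hc' c u u' : phi u = c -> phi u' = c ->
        connect (rC (fun u => f (phi u)) (f c)) u u'.
      move=> <- e; apply: connect_sub (Hc u u' (esym e)).
      by move=> p q /mono /connect1.
    have [x0 [y0 [x0a y0b xy0]]] := Hl a b Eab.
    have fa : f a = a by rewrite /f (negbTE ab).
    have fb : f b = a by rewrite /f eqxx.
    move=> u u'; case: (phi u =P phi u') => [same|diff].
      by move=> _; exact: Hc' _ _ _ erefl (esym same).
    case: (phi u =P b) => ub; case: (phi u' =P b) => ub' e.
    * by case: diff; rewrite ub ub'.
    * have fu : f (phi u) = a by rewrite ub fb.
      have pa : phi u' = a.
        by move: e; rewrite fu /f ifN //; apply/eqP.
      rewrite fu; apply: (@connect_trans _ _ y0).
        by have := Hc' b u y0 ub y0b; rewrite fb.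
      apply: (@connect_trans _ _ x0).
        by apply: connect1; rewrite /rC C2_sym xy0 y0b x0a fb fa eqxx.
      by have := Hc' a x0 u' x0a pa; rewrite fa.
    * have fu' : f (phi u') = a by rewrite ub' fb.
      have pa : phi u = a.
        by move: e; rewrite fu' /f ifN //; apply/eqP.
      rewrite pa fa; apply: (@connect_trans _ _ x0).
        by have := Hc' a u x0 pa x0a; rewrite fa.
      apply: (@connect_trans _ _ y0).
        by apply: connect1; rewrite /rC xy0 y0b x0a fb fa eqxx.
      by have := Hc' b y0 u' y0b ub'; rewrite fb.
    * by case: diff; move: e; rewrite /f !ifN //; apply/eqP.
Qed.

Lemma Inv_minor n (G G' : sgraph 'I_n) : minor_of G G' -> Inv G -> Inv G'.
Proof. by elim=> {G G'} [//|G G1 G2 s _ IH] /(Inv_step s). Qed.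

Lemma deg_le4 n (u : 'I_n) : n = 7 \/ n = 8 -> #|[set v | C2_rel u v]| <= 4.
Proof.
move=> hn; have -> : [set v | C2_rel u v] = [set v : 'I_n | C2n n u v] by apply/setP => v; rewrite !inE.
have E := card_setP n (C2n n u); rewrite E {E}.
case/andP: deg78 => /allP h7 /allP h8.
case: hn u => -> u; [apply: h7 | apply: h8]; by rewrite mem_iota /=.
Qed.

Lemma pair_le5 (u u' : 'I_8) : C2_rel u u' ->
  #|[set v | (C2_rel u v || C2_rel u' v) && (v != u) && (v != u')]| <= 5.
Proof.
move=> e.
have -> : [set v | (C2_rel u v || C2_rel u' v) && (v != u) && (v != u')] =
  [set v : 'I_8 | (fun k => (C2n 8 u k || C2n 8 u' k) && (k != u) && (k != u')) v].
  by apply/setP => v; rewrite !inE.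
have E := card_setP 8 (fun k => (C2n 8 u k || C2n 8 u' k) && (k != u) && (k != u')); rewrite E {E}.
have m1 : nat_of_ord u \in iota 0 8 by rewrite mem_iota /=; exact: ltn_ord u.
have m2 : nat_of_ord u' \in iota 0 8 by rewrite mem_iota /=; exact: ltn_ord u'.
have /allP h2 := allP pair8 u m1.
exact: (implyP (h2 u' m2) e).
Qed.

Lemma no_minor n : 5 <= n <= 8 -> ~ has_minor (C2 n) W6_rel.
Proof.
move=> hn [G' [HM [f [finj fV fE]]]].
have [phi [HE HV Hon Hl Hc]] := Inv_minor HM (Inv_C2 n).
pose h := f ord0.
have rim i : i != ord0 -> exists u v, [/\ phi u = h, phi v = f i & C2_rel u v].
  move=> i0; apply: Hl; rewrite fE.
  by move: i i0; do 7?[case=> //=]; case.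
pose F := [set u | phi u == h].
pose N := [set v | [exists u in F, C2_rel u v] && (v \notin F)].
have sub : [set f i | i in [set~ ord0]] \subset phi @: N.
  apply/subsetP => x /imsetP[i]; rewrite !inE => i0 ->.
  have [u [v [uh vi uv]]] := rim i i0.
  apply/imsetP; exists v => //; rewrite !inE vi.
  apply/andP; split; first by apply/existsP; exists u; rewrite !inE uh eqxx.
  by apply: contra i0 => /eqP /finj ->.
have c6 : 6 <= #|N|.
  have := subset_leq_card sub; rewrite card_imset // cardsC1 card_ord /= => h6.
  exact: leq_trans h6 (leq_imset_card _ _).
have cNF : #|N| + #|F| <= n.
  have : N \subset ~: F by apply/subsetP => v; rewrite !inE => /andP[_ ->].
  by move/subset_leq_card; have := cardsC F; rewrite card_ord; lia.
have F0 : 0 < #|F|.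
  have [u [v [uh _ _]]] := rim (@Ordinal 7 1 isT) isT.
  by apply/card_gt0P; exists u; rewrite inE uh.
have [F1|F2] : #|F| = 1 \/ #|F| = 2 by lia.
- have /cards1P [u0 Fu0] : #|F| == 1 by rewrite F1.
  have : N \subset [set v | C2_rel u0 v].
    apply/subsetP => v; rewrite !inE => /andP[/existsP[u]]; rewrite Fu0 !inE.
    by case/andP=> /eqP -> .
  move/subset_leq_card; have := deg_le4 u0; lia.
- have n8 : n = 8 by lia.
  have /cards2P [x [y [xy Fxy]]] : #|F| == 2 by rewrite F2.
  have xF : x \in F by rewrite Fxy !inE eqxx.
  have yF : y \in F by rewrite Fxy !inE eqxx orbT.
  have exy : C2_rel x y.
    move: xF yF; rewrite !inE => /eqP xh /eqP yh.
    have := Hc x y (etrans xh (esym yh)); case/connectP => p.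
    case: p => [/= _ yx|w p /= /andP[/andP[/andP[xw _] /eqP wx] _] _].
      by rewrite yx eqxx in xy.
    have : w \in F by rewrite inE wx xh.
    rewrite Fxy !inE => /orP[/eqP wx'|/eqP wy]; last by rewrite -wy.
    by rewrite wx' C2_irr in xw.
  have : N \subset [set v | (C2_rel x v || C2_rel y v) && (v != x) && (v != y)].
    apply/subsetP => v; rewrite !inE => /andP[/existsP[u]]; rewrite Fxy !inE.
    move=> /andP[uxy e] nv.
    have vx : v != x by apply: contra nv => /eqP ->; rewrite inE in xF.
    have vy : v != y by apply: contra nv => /eqP ->; rewrite inE in yF.
    rewrite vx vy !andbT.
    by case/orP: uxy => /eqP ux; rewrite -ux e ?orbT.
  move/subset_leq_card => H2; subst n; have := pair_le5 exy; lia.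
Qed.


Definition Q n (V : {set 'I_n}) (phi : 'I_n -> 'I_n) : sgraph 'I_n :=
  SGraph V (fun x y => [&& x \in V, y \in V, x != y &
     [exists u, exists v, (phi u == x) && (phi v == y) && C2_rel u v]]).

Lemma Q_contract n (V : {set 'I_n}) phi a b : gE (Q V phi) a b ->
  contract_edge (Q V phi) a b = Q (V :\ b) (fun u => if phi u == b then a else phi u).
Proof.
case/and4P=> aV bV ab _; rewrite /contract_edge /Q /=; congr SGraph.
apply: functional_extensionality => x; apply: functional_extensionality => y.
apply/idP/idP.
- case/and4P=> xV' yV' xy H; rewrite xV' yV' xy /=.
  move: (xV') (yV'); rewrite !inE => /andP[xb xV] /andP[yb yV].
  case/or3P: H => [/and4P[_ _ _ /existsP[u /existsP[v /andP[/andP[/eqP pu /eqP pv] e]]]]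
                  |/andP[/eqP xa /and4P[_ _ _ /existsP[u /existsP[v /andP[/andP[/eqP pu /eqP pv] e]]]]]
                  |/andP[/eqP ya /and4P[_ _ _ /existsP[u /existsP[v /andP[/andP[/eqP pu /eqP pv] e]]]]]];
    apply/existsP; exists u; apply/existsP; exists v; rewrite e andbT.
  + by rewrite pu pv (negbTE xb) (negbTE yb) !eqxx.
  + by rewrite pu pv eqxx (negbTE yb) xa !eqxx.
  + by rewrite pu pv eqxx (negbTE xb) ya !eqxx.
- case/and4P=> xV' yV' xy /existsP[u /existsP[v /andP[/andP[pu pv] e]]].
  rewrite xV' yV' xy /=.
  move: (xV') (yV'); rewrite !inE => /andP[xb xV] /andP[yb yV].
  move: pu pv; case: ifP => [/eqP ub /eqP ax|ub /eqP ux]; case: ifP => [/eqP vb /eqP ay|vb /eqP vy].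
  + by move: xy; rewrite -ax -ay eqxx.
  + apply/orP; right; apply/orP; left; rewrite -ax eqxx bV yV /= eq_sym yb /=.
    by apply/existsP; exists u; apply/existsP; exists v; rewrite ub vy !eqxx e.
  + apply/orP; right; apply/orP; right; rewrite -ay eqxx bV xV /= xb /=.
    by apply/existsP; exists u; apply/existsP; exists v; rewrite ux vb !eqxx e.
  + apply/orP; left; rewrite xV yV /=.
    by apply/existsP; exists u; apply/existsP; exists v; rewrite ux vy !eqxx e.
Qed.

Lemma Q_congr n (V1 V2 : {set 'I_n}) phi1 phi2 : V1 = V2 -> phi1 =1 phi2 -> Q V1 phi1 = Q V2 phi2.
Proof. by move=> -> /functional_extensionality ->. Qed.

Lemma Q_sym n (V : {set 'I_n}) phi x y : gE (Q V phi) x y = gE (Q V phi) y x.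
Proof.
rewrite /=; apply/idP/idP => /and4P[xV yV xy /existsP[u /existsP[v /andP[/andP[pu pv] e]]]];
  rewrite xV yV eq_sym xy /=; apply/existsP; exists v; apply/existsP; exists u;
  by rewrite pu pv C2_sym e.
Qed.

Lemma C2_Q n : C2 n = Q [set: 'I_n] id.
Proof.
rewrite /C2 /Q; congr SGraph.
apply: functional_extensionality => x; apply: functional_extensionality => y.
rewrite !in_setT /=; apply/idP/idP.
- move=> e; have := e; case/andP => -> _ /=.
  by apply/existsP; exists x; apply/existsP; exists y; rewrite !eqxx e.
- by case/andP=> _ /existsP[u /existsP[v /andP[/andP[/eqP <- /eqP <-] e]]].
Qed.

Lemma minor_trans T (G1 G2 G3 : sgraph T) : minor_of G1 G2 -> minor_of G2 G3 -> minor_of G1 G3.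
Proof. elim=> {G1 G2} [//|G G1 G2 s _ IH] /IH; exact: MO_step. Qed.

Lemma minor_snoc T (G1 G2 G3 : sgraph T) : minor_of G1 G2 -> minor_step G2 G3 -> minor_of G1 G3.
Proof. move=> h s; apply: minor_trans h (MO_step s (MO_refl _)). Qed.

Definition Dset (T : finType) (E E' : rel T) : {set T * T} := [set p | E p.1 p.2 && ~~ E' p.1 p.2].

Lemma del_many (T : finType) (V : {set T}) (E E' : rel T) :
  (forall x y, E x y = E y x) -> (forall x y, E' x y = E' y x) ->
  (forall x y, E' x y -> E x y) -> minor_of (SGraph V E) (SGraph V E').
Proof.
move=> sE sE' sub.
move: {2}#|Dset E E'| (leqnn #|Dset E E'|) => k.
elim: k E sE sub => [|k IH] E sE sub hk.
- have -> : E = E'; last exact: MO_refl.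
  apply: functional_extensionality => x; apply: functional_extensionality => y.
  apply/idP/idP; last exact: sub.
  move=> e; apply/negPn/negP => ne.
  have : (x, y) \in Dset E E' by rewrite inE /= e ne.
  by move: hk; rewrite leqn0 => /eqP/cards0_eq ->; rewrite inE.
- case: (set_0Vmem (Dset E E')) => [D0|[[a b] pD]].
  + apply: IH => //; by rewrite D0 cards0.
  + have eab : E a b by move: pD; rewrite inE /= => /andP[].
    apply: MO_step (MS_del (G := SGraph V E) eab) _.
    rewrite /del_edge /=.
    move: pD; rewrite inE /= => /andP[_ nab].
    apply: IH.
    * by move=> x y; rewrite sE; case: (x == a); case: (y == a); case: (x == b); case: (y == b).
    * move=> x y e'; rewrite sub //=; apply/negP => /orP[] /andP[/eqP xa /eqP yb].
      - by move: nab; rewrite -xa -yb e'.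
      - by move: nab; rewrite -xa -yb sE' e'.
    * have : Dset (fun x y => E x y && ~~ (((x == a) && (y == b)) || ((x == b) && (y == a)))) E'
          \subset Dset E E' :\ (a, b).
        apply/subsetP => [[x y]]; rewrite !inE /= => /andP[/andP[e /norP[h1 h2]] ne].
        rewrite e ne andbT /= andbT; apply: contra h1 => /eqP [-> ->]; by rewrite !eqxx.
      have pD : (a, b) \in Dset E E' by rewrite inE /= eab nab.
      move/subset_leq_card => H1; apply: leq_trans H1 _; rewrite -ltnS; apply: leq_trans _ hk.
      by rewrite [X in _ < X](cardsD1 (a, b)) pD.
Qed.

Definition gst (A : seq nat) (k i : nat) : nat :=
  if i \in A then 0 else if (7 <= i) && (i <= k) then 6 else i.
Definition phst (m : nat) (A : seq nat) (k : nat) : ordinal (m.+4.+4.+1) -> ordinal (m.+4.+4.+1) := fun u => inord (gst A k u).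
Arguments phst : clear implicits.
Definition Vst (m : nat) (A : seq nat) (k : nat) : {set ordinal (m.+4.+4.+1)} := [set u : ordinal (m.+4.+4.+1) | gst A k u == u].
Arguments Vst : clear implicits.
Definition Gst (m : nat) (A : seq nat) (k : nat) := Q (Vst m A k) (phst m A k).

Arguments Gst : clear implicits.
Lemma gst_lt m A k i : i < m.+4.+4.+1 -> gst A k i < m.+4.+4.+1.
Proof. rewrite /gst; case: ifP => _; first by []. case: ifP => _ //. Qed.

Lemma C2n_intro N i j : i < N -> j < N -> i != j ->
  [|| j == i + 1, j == i + 2, j + N == i + 1, j + N == i + 2,
      i == j + 1, i == j + 2, i + N == j + 1 | i + N == j + 2] -> C2n N i j.
Proof.
move=> hi hj ij H; rewrite /C2n ij /=.
have key x z : z < N -> (x == z) || (x == z + N) -> x %% N == z.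
  by move=> hz /orP[] /eqP ->; rewrite ?modnDr modn_small.
case: (boolP ((i + 1 == j) || (i + 1 == j + N))) => [/(key _ _ hj) -> //|h1].
case: (boolP ((i + 2 == j) || (i + 2 == j + N))) => [/(key _ _ hj) ->|h2]; first by rewrite orbT.
case: (boolP ((j + 1 == i) || (j + 1 == i + N))) => [/(key _ _ hi) ->|h3]; first by rewrite !orbT.
case: (boolP ((j + 2 == i) || (j + 2 == i + N))) => [/(key _ _ hi) ->|h4]; first by rewrite !orbT.
exfalso; lia.
Qed.

Lemma edge_st m A k (a b p q : nat) : a < m.+4.+4.+1 -> b < m.+4.+4.+1 -> p < m.+4.+4.+1 -> q < m.+4.+4.+1 ->
  gst A k a = a -> gst A k b = b -> a != b -> gst A k p = a -> gst A k q = b ->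
  C2n (m.+4.+4.+1) p q -> gE (Gst m A k) (inord a) (inord b).
Proof.
move=> ha hb hp hq ga gb ab gp gq e.
rewrite /= !inE !inordK // ga gb !eqxx /=.
have -> : (inord a != inord b :> ordinal (m.+4.+4.+1)).
  by apply: contra ab => /eqP /(congr1 (@nat_of_ord _)); rewrite !inordK // => ->.
apply/existsP; exists (inord p); apply/existsP; exists (inord q).
by rewrite /phst C2E !inordK // gp gq !eqxx e.
Qed.

Lemma Gstep m A k A' k' (a b : nat) : a < m.+4.+4.+1 -> b < m.+4.+4.+1 ->
  gE (Gst m A k) (inord a) (inord b) ->
  (forall i, i < m.+4.+4.+1 -> (i != b) && (gst A k i == i) = (gst A' k' i == i)) ->
  (forall i, i < m.+4.+4.+1 -> (if gst A k i == b then a else gst A k i) = gst A' k' i) ->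
  minor_step (Gst m A k) (Gst m A' k').
Proof.
move=> ha hb e hV hphi.
have -> : Gst m A' k' = contract_edge (Gst m A k) (inord a) (inord b).
  rewrite /Gst (Q_contract e); apply: Q_congr.
  - apply/setP => u; rewrite !inE -hV //.
    by congr (_ && _); apply/idP/idP => h; [apply: contra h => /eqP -> ; rewrite inordK | apply: contra h => /eqP <-; apply/eqP/val_inj; rewrite /= inordK].
  - move=> u; apply: val_inj => /=; rewrite /phst.
    have lt := gst_lt A k (ltn_ord u).
    have E : (inord (gst A k u) == inord b :> ordinal (m.+4.+4.+1)) = (gst A k u == b).
      apply/eqP/eqP => [h|->//]; by move/(congr1 (@nat_of_ord _)): h; rewrite !inordK.
    rewrite E -hphi //; case: ifP => _; rewrite !inordK //.
exact: MS_contr e.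
Qed.

Ltac dest_if := repeat match goal with |- context [if ?c then _ else _] =>
  lazymatch c with context [if _ then _ else _] => fail | _ => idtac end;
  let H := fresh "H" in case: (boolP c) => H /= end.
Ltac sn := first [ by apply: C2n_intro; rewrite /=; lia
                 | by rewrite /= /gst ?in_nil ?inE; dest_if; lia
                 | by rewrite /=; lia ].

Lemma chain m k : 6 <= k <= m + 6 -> minor_of (C2 (m.+4.+4.+1)) (Gst m [:: 2; 4] k).
Proof.
elim: k => [|k IH] hk; first lia.
have [k6|k6] : k.+1 = 6 \/ 6 <= k by lia.
- rewrite k6.
  have -> : C2 (m.+4.+4.+1) = Gst m [::] 6.
    rewrite C2_Q /Gst; apply: Q_congr.
    + apply/setP => u; case: u => [i hi]; rewrite /Vst !inE /gst /=; case: ifP => ?; lia.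
    + move=> u; apply: val_inj; rewrite /= inordK /gst /=; case: u => [i hi] /=; case: ifP => ?; lia.
  apply: (@minor_snoc _ _ (Gst m [:: 2] 6)).
  - apply: MO_step (MO_refl _).
    apply: (@Gstep m [::] 6 [:: 2] 6 0 2); try sn.
    + apply: (@edge_st _ _ _ _ _ 0 2); sn.
    + move=> i hi; rewrite /gst ?in_nil ?inE; dest_if; lia.
    + move=> i hi; rewrite /gst ?in_nil ?inE; dest_if; lia.
  apply: (@Gstep m [:: 2] 6 [:: 2; 4] 6 0 4); try sn.
  + apply: (@edge_st _ _ _ _ _ 2 4); sn.
  + move=> i hi; rewrite /gst ?in_nil ?inE; dest_if; lia.
  + move=> i hi; rewrite /gst ?in_nil ?inE; dest_if; lia.
- apply: minor_snoc (IH _) _; first lia.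
  apply: (@Gstep m [:: 2; 4] k [:: 2; 4] k.+1 6 k.+1); try sn.
  + apply: (@edge_st _ _ _ _ _ k k.+1); sn.
  + move=> i hi; rewrite /gst ?in_nil ?inE; dest_if; lia.
  + move=> i hi; rewrite /gst ?in_nil ?inE; dest_if; lia.
Qed.

Definition fv (m i : nat) : nat :=
  match i with 0 => 0 | 1 => 1 | 2 => 3 | 3 => 5 | 4 => 6 | 5 => m + 7 | _ => m + 8 end.

Lemma fv_lt m i : fv m i < m.+4.+4.+1.
Proof. case: i => [|[|[|[|[|[|i]]]]]] /=; lia. Qed.

Lemma fv_inj m i j : i < 7 -> j < 7 -> fv m i = fv m j -> i = j.
Proof. case: i => [|[|[|[|[|[|[|i]]]]]]]; case: j => [|[|[|[|[|[|[|j]]]]]]] //=; lia. Qed.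

Lemma fv_fix m i : gst [:: 2; 4] (m + 6) (fv m i) = fv m i.
Proof. rewrite /gst ?inE; case: i => [|[|[|[|[|[|i]]]]]] /=; dest_if; lia. Qed.

Lemma fv_onto m i : i < m.+4.+4.+1 -> gst [:: 2; 4] (m + 6) i = i -> exists j, j < 7 /\ fv m j = i.
Proof.
move=> hi; rewrite /gst ?inE; dest_if => h.
- lia.
- lia.
- have : i = 0 \/ i = 1 \/ i = 3 \/ i = 5 \/ i = 6 \/ i = m + 7 \/ i = m + 8 by lia.
  case=> [->|[->|[->|[->|[->|[->|->]]]]]].
  + by exists 0. + by exists 1. + by exists 2. + by exists 3. + by exists 4.
  + by exists 5. + by exists 6.
Qed.

Lemma W6_sym (i j : 'I_7) : W6_rel i j = W6_rel j i.
Proof. by case: i => [[|[|[|[|[|[|[|i]]]]]]] hi] //; case: j => [[|[|[|[|[|[|[|j]]]]]]] hj]. Qed.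

Definition Gfin m := Gst m [:: 2; 4] (m + 6).
Definition ff m (i : 'I_7) : ordinal (m.+4.+4.+1) := inord (fv m i).

Lemma eF m a b p q : gst [:: 2; 4] (m + 6) p = a -> gst [:: 2; 4] (m + 6) q = b ->
   a < m.+4.+4.+1 -> b < m.+4.+4.+1 -> p < m.+4.+4.+1 -> q < m.+4.+4.+1 ->
   gst [:: 2; 4] (m + 6) a = a -> gst [:: 2; 4] (m + 6) b = b -> a != b ->
   C2n (m.+4.+4.+1) p q -> gE (Gfin m) (inord a) (inord b).
Proof. move=> ga gb ha hb hp hq fa fb ab e; exact: (edge_st ha hb hp hq fa fb ab ga gb e). Qed.

Lemma e01 m : gE (Gfin m) (inord 0) (inord 1). Proof. apply: (@eF m 0 1 0 1); sn. Qed.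
Lemma e02 m : gE (Gfin m) (inord 0) (inord 3). Proof. apply: (@eF m 0 3 2 3); sn. Qed.
Lemma e03 m : gE (Gfin m) (inord 0) (inord 5). Proof. apply: (@eF m 0 5 4 5); sn. Qed.
Lemma e04 m : gE (Gfin m) (inord 0) (inord 6). Proof. apply: (@eF m 0 6 4 6); sn. Qed.
Lemma e05 m : gE (Gfin m) (inord 0) (inord (m + 7)). Proof. apply: (@eF m 0 (m + 7) 0 (m + 7)); sn. Qed.
Lemma e06 m : gE (Gfin m) (inord 0) (inord (m + 8)). Proof. apply: (@eF m 0 (m + 8) 0 (m + 8)); sn. Qed.
Lemma e12 m : gE (Gfin m) (inord 1) (inord 3). Proof. apply: (@eF m 1 3 1 3); sn. Qed.
Lemma e23 m : gE (Gfin m) (inord 3) (inord 5). Proof. apply: (@eF m 3 5 3 5); sn. Qed.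
Lemma e34 m : gE (Gfin m) (inord 5) (inord 6). Proof. apply: (@eF m 5 6 5 6); sn. Qed.
Lemma e45 m : gE (Gfin m) (inord 6) (inord (m + 7)). Proof. apply: (@eF m 6 (m + 7) (m + 6) (m + 7)); sn. Qed.
Lemma e56 m : gE (Gfin m) (inord (m + 7)) (inord (m + 8)). Proof. apply: (@eF m (m + 7) (m + 8) (m + 7) (m + 8)); sn. Qed.
Lemma e61 m : gE (Gfin m) (inord (m + 8)) (inord 1). Proof. apply: (@eF m (m + 8) 1 (m + 8) 1); sn. Qed.

Lemma eS m a b : gE (Gfin m) a b -> gE (Gfin m) b a.
Proof. by rewrite /Gfin Q_sym. Qed.

Ltac eall := first [ exact: e01 | exact: e02 | exact: e03 | exact: e04 | exact: e05 | exact: e06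
                   | exact: e12 | exact: e23 | exact: e34 | exact: e45 | exact: e56 | exact: e61 ].

Lemma has9 m : has_minor (C2 (m.+4.+4.+1)) W6_rel.
Proof.
pose T := fun x y : ordinal (m.+4.+4.+1) =>
  [exists i, exists j, (ff m i == x) && (ff m j == y) && W6_rel i j].
have finj : injective (ff m).
  move=> i j /(congr1 (@nat_of_ord _)); rewrite /ff !inordK ?fv_lt // => h.
  apply: val_inj; exact: fv_inj (ltn_ord i) (ltn_ord j) h.
exists (SGraph (Vst m [:: 2; 4] (m + 6)) T); split.
- apply: minor_trans (@chain m (m + 6) _) _; first lia.
  apply: del_many.
  + move=> x y; exact: (Q_sym _ _ x y).
  + move=> x y; rewrite /T; apply/idP/idP => /existsP[i /existsP[j /andP[/andP[a b] w]]];
      apply/existsP; exists j; apply/existsP; exists i; by rewrite a b W6_sym w.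
  + move=> x y /existsP[i /existsP[j /andP[/andP[/eqP <- /eqP <-] w]]].
    move: i j w; case=> [[|[|[|[|[|[|[|i]]]]]]] hi] //; case=> [[|[|[|[|[|[|[|j]]]]]]] hj] // w;
      first [ by [] | eall | apply: eS; eall ].
- exists (ff m); split => //.
  + move=> x; split.
    * rewrite /Vst inE => /eqP h; have [j [hj e]] := fv_onto (ltn_ord x) h.
      exists (inord j); apply: val_inj; rewrite /ff /= !inordK ?fv_lt //.
    * by case=> u <-; rewrite /= /Vst inE /ff inordK ?fv_lt // fv_fix.
  + move=> u v; rewrite /T /=; apply/existsP/idP =>
      [[i /existsP[j /andP[/andP[/eqP /finj -> /eqP /finj ->] w]]] //|w].
    by exists u; apply/existsP; exists v; rewrite !eqxx w.
Qed.


Unset Implicit Arguments.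

Theorem lemma3p4 (n : nat) : 5 <= n ->
  (~ has_minor (C2 n) W6_rel <-> (5 <= n <= 8)).
Proof.
move=> h5; split.
- move=> H; apply/andP; split => //; rewrite leqNgt; apply/negP => h9.
  apply: H; have -> : n = (n - 9).+4.+4.+1 by lia.
  exact: has9.
- by move=> h; exact: no_minor h.
Qed.
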